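(* Let $\widehat{\mathcal M}=(E_{2n}\cup\{q\},\widehat{\mathcal C})$ be an oriented matroid. Suppose there exist two distinct circuits $X,Y\in\widehat{\mathcal C}$ whose supports are complementary, with $X_q=Y_q=+$, such that for every $i\in[n]$ either $X_{s_i}Y_{t_i}=X_{t_i}Y_{s_i}=0$, or ($X_{s_i}=Y_{t_i}$ and $X_{t_i}=Y_{s_i}$). Then $\widehat{\mathcal M}$ is not a P-matroid extension.
   Context: An oriented matroid $(E,\mathcal C)$ is given by its circuits, signed sets $X\in\{-,0,+\}^E$ satisfying: (C0) the zero vector is not a circuit; (C1) $X\in\mathcal C\iff -X\in\mathcal C$; (C2) if $\underline X\subseteq\underline Y$ then $X=\pm Y$; (C3) for $X\neq -Y$ and $e$ with $X_e=+$, $Y_e=-$, there is a circuit $Z$ with $Z^+\subseteq(X^+\cup Y^+)\setminus\{e\}$ and $Z^-\subseteq(X^-\cup Y^-)\setminus\{e\}$. Here $\underline X=\{e:X_e\neq0\}$, $X^\pm=\{e:X_e=\pm\}$. A basis is an inclusion-maximal subset of $E$ containing no circuit support. $S=\{s_1,\dots,s_n\}$, $T=\{t_1,\dots,t_n\}$, $E_{2n}=S\cup T$, $q\notin E_{2n}$; a set is complementary if it contains no pair $\{s_i,t_i\}$. A circuit $X$ is sign-reversing if $X_{s_i}=-X_{t_i}$ for every $i$ with $\{s_i,t_i\}\subseteq\underline X$. A P-matroid is an oriented matroid on $E_{2n}$ in which $S$ is a basis and no circuit is sign-reversing. A P-matroid extension is an oriented matroid on $E_{2n}\cup\{q\}$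 whose circuits $X$ with $X_q=0$, restricted to $E_{2n}$, are exactly the circuits of a P-matroid. (In a P-matroid extension every complementary set of size $n$ is a basis.) *)

(* Defs.v *)
From HB Require Import structures.
From mathcomp Require Import all_boot.
Set Implicit Arguments. Unset Strict Implicit. Unset Printing Implicit Defensive.

Inductive sgn := Neg | Zer | Pos.

Definition sgn_to_ord (x : sgn) : 'I_3 :=
  match x with Neg => inord 0 | Zer => inord 1 | Pos => inord 2 end.
Definition sgn_of_ord (i : 'I_3) : sgn :=
  match val i with 0 => Neg | 1 => Zer | _ => Pos end.
Lemma sgn_to_ordK : cancel sgn_to_ord sgn_of_ord.
Proof. by case; rewrite /sgn_of_ord /= inordK. Qed.
HB.instance Definition _ := Finite.copy sgn (can_type sgn_to_ordK).

Definition sgn_opp (x : sgn) : sgn :=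
  match x with Neg => Pos | Zer => Zer | Pos => Neg end.

Section SignedSets.
Variable T : finType.
Definition signed := {ffun T -> sgn}.
Definition oppS (X : signed) : signed := [ffun e => sgn_opp (X e)].
Definition zeroS : signed := [ffun _ => Zer].
Definition supp (X : signed) : {set T} := [set e | X e != Zer].
Definition posS (X : signed) : {set T} := [set e | X e == Pos].
Definition negS (X : signed) : {set T} := [set e | X e == Neg].

Definition oriented_matroid (C : {set signed}) : Prop :=
  [/\ zeroS \notin C,
      (forall X, X \in C <-> oppS X \in C),
      (forall X Y, X \in C -> Y \in C -> supp X \subset supp Y ->
          X = Y \/ X = oppS Y) &
      (forall X Y e, X \in C -> Y \in C -> X <> oppS Y ->
          X e = Pos -> Y e = Neg ->
          exists2 Z, Z \in C &
            posS Z \subset (posS X :|: posS Y) :\ e /\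
            negS Z \subset (negS X :|: negS Y) :\ e)].

Definition indep (C : {set signed}) (B : {set T}) : Prop :=
  forall X, X \in C -> ~~ (supp X \subset B).
Definition is_basis (C : {set signed}) (B : {set T}) : Prop :=
  indep C B /\ (forall B' : {set T}, B \subset B' -> indep C B' -> B' = B).
End SignedSets.

Definition E2 (n : nat) := ('I_n * bool)%type.
Definition s_ (n : nat) (i : 'I_n) : E2 n := (i, false).
Definition t_ (n : nat) (i : 'I_n) : E2 n := (i, true).
Definition Sset (n : nat) : {set E2 n} := [set e | ~~ e.2].

Definition Eq (n : nat) := option (E2 n).
Definition qel (n : nat) : Eq n := None.
Definition sq (n : nat) (i : 'I_n) : Eq n := Some (s_ i).
Definition tq (n : nat) (i : 'I_n) : Eq n := Some (t_ i).

Definition complementary (n : nat) (A : {set Eq n}) : Prop :=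
  forall i : 'I_n, ~ (sq i \in A /\ tq i \in A).

Definition sign_reversing (n : nat) (X : signed (E2 n)) : Prop :=
  forall i : 'I_n, X (s_ i) != Zer -> X (t_ i) != Zer ->
    X (s_ i) = sgn_opp (X (t_ i)).

Definition P_matroid (n : nat) (C : {set signed (E2 n)}) : Prop :=
  [/\ oriented_matroid C, is_basis C (Sset n) &
      forall X, X \in C -> ~ sign_reversing X].

Definition restrE (n : nat) (X : signed (Eq n)) : signed (E2 n) :=
  [ffun e => X (Some e)].

Definition P_matroid_extension (n : nat) (C : {set signed (Eq n)}) : Prop :=
  oriented_matroid C /\
  P_matroid [set restrE X | X in C & X (qel n) == Zer].

(* Main.v *)
Require Import Defs.
From HB Require Import structures.
From mathcomp Require Import all_boot.

Definition sgn_eqb (a b : sgn) := match a, b with Neg,Neg|Zer,Zer|Pos,Pos => true | _,_ => false end.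
Lemma sgn_eqE (a b : sgn) : (a == b) = sgn_eqb a b.
Proof. case: a; case: b => /=; first [exact: eqxx | apply/negbTE/eqP; discriminate]. Qed.

Theorem mainTheorem10 (n : nat) (C : {set signed (Eq n)}) :
  oriented_matroid C ->
  forall X Y : signed (Eq n),
    X \in C -> Y \in C -> X <> Y ->
    complementary (supp X) -> complementary (supp Y) ->
    X (qel n) = Pos -> Y (qel n) = Pos ->
    (forall i : 'I_n,
        ((X (sq i) == Zer) || (Y (tq i) == Zer)) /\
        ((X (tq i) == Zer) || (Y (sq i) == Zer))
      \/ (X (sq i) = Y (tq i) /\ X (tq i) = Y (sq i))) ->
    ~ P_matroid_extension C.
Proof.
move=> [H0 Hopp Hsup Helim] X Y HX HY XneY cX cY Xq Yq Hi [_ [_ _ Hnsr]].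
have HY' : oppS Y \in C by apply/Hopp; rewrite (_ : oppS (oppS Y) = Y) //;
  apply/ffunP => e; rewrite !ffunE; case: (Y e).
have neq : X <> oppS (oppS Y).
  by rewrite (_ : oppS (oppS Y) = Y) //; apply/ffunP => e; rewrite !ffunE; case: (Y e).
have Yq' : oppS Y (qel n) = Neg by rewrite ffunE Yq.
have [Z HZ [Hp Hn]] := Helim X (oppS Y) (qel n) HX HY' neq Xq Yq'.
have hP : forall e, Z e = Pos -> e <> qel n /\ (X e = Pos \/ Y e = Neg).
  move=> e Ze; have := subsetP Hp e; rewrite !inE Ze ffunE eqxx => /(_ isT).
  rewrite !sgn_eqE.
  case/andP => /eqP He /orP[|]; first by case: (X e) => //; split; [exact He|left].
  by case: (Y e) => //= _; split; [exact He|right].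
have hN : forall e, Z e = Neg -> e <> qel n /\ (X e = Neg \/ Y e = Pos).
  move=> e Ze; have := subsetP Hn e; rewrite !inE Ze ffunE eqxx => /(_ isT).
  rewrite !sgn_eqE.
  case/andP => /eqP He /orP[|]; first by case: (X e) => //; split; [exact He|left].
  by case: (Y e) => //= _; split; [exact He|right].
apply: (Hnsr (restrE Z)).
  apply/imsetP; exists Z => //; rewrite inE HZ /=.
  case E: (Z (qel n)) => //.
  - by case: (hN _ E).
  - by case: (hP _ E).
move=> i; rewrite /restrE !ffunE => Zs Zt.
have := cX i; have := cY i; have := Hi i; rewrite !inE !sgn_eqE.
have := hP (sq i); have := hN (sq i); have := hP (tq i); have := hN (tq i).
rewrite /sq /tq in Zs Zt *.
move: Zs Zt; rewrite !sgn_eqE.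
case: (Z (Some (s_ i))); case: (Z (Some (t_ i)));
case: (X (Some (s_ i))); case: (X (Some (t_ i)));
case: (Y (Some (s_ i))); case: (Y (Some (t_ i))) => //=; intuition (try discriminate).
Qed.
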